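(* Let $\mathcal{D}\subset\mathbb{R}^2$ be open and bounded, $\mathcal{K}=\{0,1,2\}$, $\boldsymbol{\phi}=(\phi_0,\phi_1,\phi_2)\in\mathcal{C}^\infty(\mathbb{R}^2,\mathbb{R}^3)$ with $\phi_0\equiv0$. Let $\hat x\in\mathcal{E}_{\mathcal{K}}(\boldsymbol{\phi})$ and assume $D\widehat{\boldsymbol{\phi}}_{\mathcal{K}}(\hat x)$ is invertible. Then, with the angles $\beta_0,\beta_1,\beta_2$ at $\hat x$ defined below, $\max_{k\in\mathcal{K}}\beta_k<\pi$ and $\min_{k\in\mathcal{K}}\beta_k>0$.
   Context: For $j\in\mathcal{K}$, $\Omega_j(\boldsymbol{\phi})=\operatorname{int}\{x\in\mathcal{D}\mid\phi_j(x)\le\phi_m(x)\ \forall m\ne j\}$; for $\mathcal{I}\subset\mathcal{K}$, $\mathcal{E}_{\mathcal{I}}(\boldsymbol{\phi})=\bigcap_{j\in\mathcal{I}}\partial\Omega_j(\boldsymbol{\phi})$; $\widehat{\boldsymbol{\phi}}_{\mathcal{K}}=(\phi_0-\phi_1,\phi_0-\phi_2)$. For $\mathcal{I}\in\{\{0,1\},\{1,2\},\{0,2\}\}$, $\mathbb{D}_{\mathcal{I}}$ denotes the half-tangent to the curve $\mathcal{E}_{\mathcal{I}}(\boldsymbol{\phi})$ at the triple point $\hat x$. Using polar coordinates centered at $\hat x$ with angle $\vartheta\in[0,2\pi]$, $\vartheta=0$ along $\mathbb{D}_{\{0,2\}}$, let $\vartheta_0$ be the angle of $\mathbb{D}_{\{0,1\}}$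 and $\vartheta_1$ that of $\mathbb{D}_{\{1,2\}}$, where the labels of $\phi_0$ and $\phi_2$ (and of the corresponding phases) are exchanged if necessary so that $\vartheta_0\le\vartheta_1$. Then $\beta_0=\vartheta_0$, $\beta_1=\vartheta_1-\vartheta_0$, $\beta_2=2\pi-\vartheta_1$ (so $\beta_0+\beta_1+\beta_2=2\pi$). *)

(* Defs.v *)
From HB Require Import structures.
From mathcomp Require Import all_boot all_order all_algebra.
From mathcomp Require Import all_classical all_reals all_analysis.
Set Implicit Arguments. Unset Strict Implicit. Unset Printing Implicit Defensive.
Import Order.TTheory GRing.Theory Num.Theory.
Import numFieldNormedType.Exports.
Local Open Scope classical_set_scope.
Local Open Scope ring_scope.

Section Defs.
Variable R : realType.

Fixpoint Ck (k : nat) (f : R * R -> R) : Prop :=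
  match k with
  | 0 => continuous f
  | k'.+1 => (forall x, differentiable f x) /\
             forall v : R * R, Ck k' (fun x => 'D_v f x)
  end.

Definition smooth (f : R * R -> R) : Prop := forall k, Ck k f.

Definition Omega (D : set (R * R)) (phi : 'I_3 -> R * R -> R) (j : 'I_3)
  : set (R * R) :=
  interior [set x | D x /\ forall m : 'I_3, m != j -> phi j x <= phi m x].

Definition bdry (A : set (R * R)) : set (R * R) := closure A `\` interior A.

Definition Eset (D : set (R * R)) (phi : 'I_3 -> R * R -> R) (I : set 'I_3)
  : set (R * R) :=
  [set x | forall j, I j -> bdry (Omega D phi j) x].

Definition phihat (phi : 'I_3 -> R * R -> R) : R * R -> R * R :=
  fun x => (phi 0 x - phi 1 x, phi 0 x - phi 2 x).

Definition eucl (v : R * R) : R := Num.sqrt (v.1 ^+ 2 + v.2 ^+ 2).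

Definition half_tangent (S : set (R * R)) (x d : R * R) : Prop :=
  limit_point S x /\
  (fun y : R * R => ((y.1 - x.1) / eucl (y - x), (y.2 - x.2) / eucl (y - x)))
    @ within (S `\ x) (nbhs x) --> d.

(* theta in [0, 2 pi) is the counterclockwise polar angle of the direction d
   measured from the reference direction e (d = rotation of e by theta). *)
Definition ccw_angle (e d : R * R) (theta : R) : Prop :=
  0 <= theta < 2 * pi /\
  d = (cos theta * e.1 - sin theta * e.2, sin theta * e.1 + cos theta * e.2).

End Defs.

(* Main.v *)
Require Import Defs.
From HB Require Import structures.
From mathcomp Require Import all_boot all_order all_algebra.
From mathcomp Require Import all_classical all_reals all_analysis.
From mathcomp Require Import lra ring.
Import Order.TTheory GRing.Theory Num.Theory.
Import numFieldNormedType.Exports.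
Local Open Scope classical_set_scope.
Local Open Scope ring_scope.
Section H.
Variable R : realType.
Implicit Types v : R * R.
Lemma eucl_pos v : v != 0 -> 0 < eucl v.
Proof.
case: v => a b /= nz; rewrite /eucl /= sqrtr_gt0.
rewrite lt_neqAle addr_ge0 ?sqr_ge0 // andbT eq_sym paddr_eq0 ?sqr_ge0 //.
rewrite !sqrf_eq0; apply: contra nz => /andP[/eqP -> /eqP ->]; by [].
Qed.
Lemma norm_le_eucl v : `|v| <= eucl v.
Proof.
case: v => a b; rewrite prod_normE /eucl /= ge_max; apply/andP; split.
- rewrite -(sqrtr_sqr a) ler_wsqrtr // lerDl sqr_ge0 //.
- rewrite -(sqrtr_sqr b) ler_wsqrtr // lerDr sqr_ge0 //.
Qed.
Lemma eucl_scale v : v != 0 -> v = eucl v *: (v.1 / eucl v, v.2 / eucl v).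
Proof.
move=> nz; have := eucl_pos v nz; move: nz; case: v => a b nz /= /lt0r_neq0 h.
by congr (_, _); rewrite -[_ *: _]/(_ * _) mulrC divfK.
Qed.
End H.
Arguments eucl_pos {R}.
Arguments norm_le_eucl {R}.
Arguments eucl_scale {R} {v}.
Lemma key (R : realType) (f : R * R -> R) (x d : R * R) (S : set (R * R)) :
  differentiable f x -> half_tangent S x d ->
  (forall y, S y -> f x <= f y) -> 0 <= 'd f x d.
Proof.
move=> df [lp cd] Sge.
rewrite leNgt; apply/negP => Ld.
set L := 'd f x.
set c := (fun y : R * R => _) in cd.
have Lc : (L \o c) @ within (S `\ x) (nbhs x) --> L d.
  apply: cvg_comp cd _; exact: diff_continuous.
have h1 := cvgr_lt (L d) Lc (L d / 2) ltac:(by rewrite ltr_pdivlMr // mulr2n mulrDr mulr1 gtrDl).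
have o := diff_locally df; move/eqaddoP: o => o.
have h2 := o (- L d / 4) ltac:(by rewrite divr_gt0 // oppr_gt0).
have h2' : \forall y \near x, `|f y - f x - L (y - x)| <= - L d / 4 * `|y - x|.
  rewrite (near_shift 0 x); near=> h; rewrite /= subr0 addrK.
  near: h. apply: filterS h2 => h /=. by rewrite opprD addrA.
have h1' : \forall y \near x, (S `\ x) y -> L (c y) < L d / 2.
  by apply: h1; apply: within_filter.
have [y [yx Sy Uy]] := lp _ (filterI h1' h2').
move: Uy => [Hc Ho].
have yx0 : y - x != 0 by rewrite subr_eq0.
have Lcy : L (c y) < L d / 2.
  by apply: Hc; split => // /= E; rewrite E eqxx in yx.
set n := eucl (y - x) in Ho.
have np : 0 < n := eucl_pos (y - x) yx0.
have Ey : L (y - x) = n * L (c y).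
  by rewrite {1}(eucl_scale yx0) linearZ.
have Sg := Sge y Sy.
have N1 := norm_le_eucl (y - x).
have A1 : f y - f x - L (y - x) <= - L d / 4 * n.
  apply: le_trans (ler_norm _) _; apply: le_trans Ho _.
  by rewrite ler_pM2l // divr_gt0 // oppr_gt0.
have A2 : n * L (c y) < n * (L d / 2) by rewrite ltr_pM2l.
rewrite Ey in A1.
have A3 : 0 < n * (- L d) by rewrite mulr_gt0 // oppr_gt0.
lra.
Unshelve. all: by end_near.
Qed.

Lemma unitd (R : realType) (S : set (R * R)) (x d : R * R) :
  half_tangent S x d -> d.1 ^+ 2 + d.2 ^+ 2 = 1.
Proof.
move=> [lp cd].
have PF : ProperFilter (within (S `\ x) (nbhs x)).
  apply: within_nbhs_proper.
  move=> B /lp [y [yx Sy By]]; exists y; split => //; split => // /= E.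
  by rewrite E eqxx in yx.
pose g := fun v : R * R => v.1 ^+ 2 + v.2 ^+ 2.
have gc : continuous g.
  move=> v; rewrite /g; apply: cvgD; rewrite expr2; apply: cvgM; (apply: cvg_fst || apply: cvg_snd).
have : closed (g @^-1` [set 1]).
  apply: preimage_closed; last exact: closed_eq.
  by move=> *; apply: gc.
move=> Hc; apply: (@closed_cvg _ _ _ PF _ _ Hc _ d cd).
suff H : \forall y \near x, (S `\ x) y -> g ((y.1 - x.1) / eucl (y - x), (y.2 - x.2) / eucl (y - x)) = 1 by exact: H.
near=> y => -[Sy /= yx].
have yx0 : y - x != 0 by rewrite subr_eq0; apply/eqP.
have np := eucl_pos (y - x) yx0.
rewrite /g /= /eucl !expr_div_n -mulrDl sqr_sqrtr ?divff //.
  by rewrite gt_eqF // -sqrtr_gt0.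
by rewrite addr_ge0 // sqr_ge0.
Unshelve. all: by end_near.
Qed.

Lemma clos_le (R : realType) (D : set (R * R)) (phi : 'I_3 -> R * R -> R)
  (j m : 'I_3) (y : R * R) :
  (forall k, continuous (phi k)) -> m != j ->
  closure (Omega D phi j) y -> phi j y <= phi m y.
Proof.
move=> cont mj.
have cl : closed ((fun z => phi m z - phi j z) @^-1` [set r | 0 <= r]).
  apply: preimage_closed; last exact: closed_ge.
  move=> z _; apply: cvgB; exact: cont.
have sub : Omega D phi j `<=` (fun z => phi m z - phi j z) @^-1` [set r | 0 <= r].
  move=> z /interior_subset [_ H] /=; rewrite subr_ge0; exact: H.
by move/(closureS sub); rewrite -(closure_id _).1 //= subr_ge0.
Qed.


Lemma sin_pos_range (R : realType) (x : R) : 0 <= x < 2 * pi -> 0 < sin x -> 0 < x < pi.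
Proof.
move=> /andP[x0 x2] sx.
have pi0 : 0 < pi := pi_gt0 R.
case: (ltP x pi) => xpi.
  case: (x =P 0) => [E|/eqP xn0]; first by rewrite E sin0 ltxx in sx.
  apply/andP; split => //; by rewrite lt_neqAle eq_sym xn0.
have : sin x = - sin (x - pi) by rewrite -sinDpi subrK.
have : 0 <= sin (x - pi) by apply: sin_ge0_pi; apply/andP; split; lra.
lra.
Qed.

Lemma sin_neg_range (R : realType) (x : R) : 0 <= x < 2 * pi -> sin x < 0 -> pi < x.
Proof.
move=> /andP[x0 x2] sx; rewrite ltNge; apply/negP => xpi.
have : 0 <= sin x by apply: sin_ge0_pi; apply/andP; split.
lra.
Qed.

Arguments sin_pos_range {R x}.
Arguments sin_neg_range {R x}.
Lemma geom (R : realType) (a b c dd e1 e2 th0 th1 : R) :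
  0 <= th0 < 2 * pi -> 0 <= th1 < 2 * pi -> e1 ^+ 2 + e2 ^+ 2 = 1 ->
  0 < e1 * a + e2 * b -> e1 * c + e2 * dd = 0 ->
  (cos th0 * e1 - sin th0 * e2) * a + (sin th0 * e1 + cos th0 * e2) * b = 0 ->
  0 < (cos th0 * e1 - sin th0 * e2) * c + (sin th0 * e1 + cos th0 * e2) * dd ->
  (cos th1 * e1 - sin th1 * e2) * a + (sin th1 * e1 + cos th1 * e2) * b =
  (cos th1 * e1 - sin th1 * e2) * c + (sin th1 * e1 + cos th1 * e2) * dd ->
  (cos th1 * e1 - sin th1 * e2) * a + (sin th1 * e1 + cos th1 * e2) * b < 0 ->
  let t0 := Num.min th0 th1 in
  let t1 := Num.max th0 th1 in
  let beta0 := t0 in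
  let beta1 := t1 - t0 in
  let beta2 := 2 * pi - t1 in
  Num.max beta0 (Num.max beta1 beta2) < pi /\
  0 < Num.min beta0 (Num.min beta1 beta2).
Proof.
move=> r0 r1 ee F1 F2 F3 F4 F5 F6 t0 t1 b0 b1 b2.
set u1 := cos th0 * e1 - sin th0 * e2 in F3 F4.
set u2 := sin th0 * e1 + cos th0 * e2 in F3 F4.
set w1 := cos th1 * e1 - sin th1 * e2 in F5 F6.
set w2 := sin th1 * e1 + cos th1 * e2 in F5 F6.
set p := e1 * a + e2 * b in F1.
set q := u1 * c + u2 * dd in F4.
set r := w1 * a + w2 * b in F5 F6.
set det := a * dd - b * c.
have I1 : det * (sin th0 * (e1 ^+ 2 + e2 ^+ 2)) =
   p * q - (e1 * c + e2 * dd) * (u1 * a + u2 * b).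
  by rewrite /det /p /q /u1 /u2; ring.
have I2 : det * ((sin th1 * cos th0 - cos th1 * sin th0) * (e1 ^+ 2 + e2 ^+ 2)) =
   (u1 * a + u2 * b) * (w1 * c + w2 * dd) - q * r.
  by rewrite /det /r /q /u1 /u2 /w1 /w2; ring.
have I3 : det * (- sin th1 * (e1 ^+ 2 + e2 ^+ 2)) =
   r * (e1 * c + e2 * dd) - (w1 * c + w2 * dd) * p.
  by rewrite /det /r /p /w1 /w2; ring.
rewrite ee F2 F3 mulr1 mul0r subr0 in I1.
rewrite ee F3 mulr1 mul0r sub0r in I2.
rewrite ee F2 -F5 mulr1 mulr0 sub0r in I3.
rewrite -sinB in I2.
have J1 : 0 < det * sin th0 by rewrite I1 mulr_gt0.
have J2 : 0 < det * sin (th1 - th0) by rewrite I2 oppr_gt0 pmulr_rlt0.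
have J3 : 0 < det * - sin th1 by rewrite I3 oppr_gt0 nmulr_rlt0.
have pi0 : 0 < pi := pi_gt0 R.
rewrite /b0 /b1 /b2 /t0 /t1 !gt_max !lt_min.
have [dpos|dneg] : 0 < det \/ det < 0.
  case: (ltrgtP det 0) => //; [by right | by left | move=> E; by rewrite E mul0r ltxx in J1].
- have s0 : 0 < sin th0 by rewrite -(pmulr_rgt0 _ dpos).
  have s1 : sin th1 < 0 by rewrite -oppr_gt0 -(pmulr_rgt0 _ dpos).
  have s2 : 0 < sin (th1 - th0) by rewrite -(pmulr_rgt0 _ dpos).
  have /andP[h0 h0'] := sin_pos_range r0 s0.
  have h1 := sin_neg_range r1 s1.
  have /andP[h2 h2'] : 0 < th1 - th0 < pi.
    apply: sin_pos_range s2; move: r0 r1 => /andP[? ?] /andP[? ?].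
    apply/andP; split; lra.
  have -> : Num.min th0 th1 = th0 by apply/min_idPl; lra.
  have -> : Num.max th0 th1 = th1 by apply/max_idPr; lra.
  move: r0 r1 => /andP[? ?] /andP[? ?].
  split; repeat (apply/andP; split); lra.
- have s0 : sin th0 < 0 by rewrite -(nmulr_rgt0 _ dneg).
  have s1 : 0 < sin th1 by rewrite -oppr_lt0 -(nmulr_rgt0 _ dneg).
  have s2 : 0 < sin (th0 - th1).
    by rewrite -opprB sinN oppr_gt0 -(nmulr_rgt0 _ dneg).
  have h0 := sin_neg_range r0 s0.
  have /andP[h1 h1'] := sin_pos_range r1 s1.
  have /andP[h2 h2'] : 0 < th0 - th1 < pi.
    apply: sin_pos_range s2; move: r0 r1 => /andP[? ?] /andP[? ?].
    apply/andP; split; lra.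
  have -> : Num.min th0 th1 = th1 by apply/min_idPr; lra.
  have -> : Num.max th0 th1 = th0 by apply/max_idPl; lra.
  move: r0 r1 => /andP[? ?] /andP[? ?].
  split; repeat (apply/andP; split); lra.
Qed.

Lemma lin2 (R : realType) (f : R * R -> R) (x v : R * R) :
  'd f x v = v.1 * 'd f x (1, 0) + v.2 * 'd f x (0, 1).
Proof.
case: v => a b /=.
have -> : (a, b) = a *: ((1, 0) : R * R) + b *: (0, 1).
  by congr (_, _) => /=; rewrite -[_ *: _]/(_ * _) -[b *: _]/(_ * _); ring.
by rewrite linearD !linearZ.
Qed.

Lemma keyle (R : realType) (f : R * R -> R) (x d : R * R) (S : set (R * R)) :
  differentiable f x -> half_tangent S x d ->
  (forall y, S y -> f y <= f x) -> 'd f x d <= 0.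
Proof.
move=> df hd H.
have := @key R (- f) x d S (differentiableN df) hd.
rewrite diffN // /= oppr_ge0; apply => y Sy /=; rewrite lerN2; exact: H.
Qed.

Theorem theorem5p1 (R : realType) (D : set (R * R)) (phi : 'I_3 -> R * R -> R)
  (xhat d01 d12 d02 : R * R) (th0 th1 : R) :
  open D -> bounded_set D ->
  (forall k : 'I_3, smooth (phi k)) ->
  phi 0 = (fun _ => 0) ->
  Eset D phi setT xhat ->
  bijective ('d (phihat phi) xhat) ->
  half_tangent (Eset D phi [set 0; 1]) xhat d01 ->
  half_tangent (Eset D phi [set 1; 2]) xhat d12 ->
  half_tangent (Eset D phi [set 0; 2]) xhat d02 ->
  ccw_angle d02 d01 th0 ->
  ccw_angle d02 d12 th1 ->
  let t0 := Num.min th0 th1 in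
  let t1 := Num.max th0 th1 in
  let beta0 := t0 in
  let beta1 := t1 - t0 in
  let beta2 := 2 * pi - t1 in
  Num.max beta0 (Num.max beta1 beta2) < pi /\
  0 < Num.min beta0 (Num.min beta1 beta2).
Proof.
move=> oD bD sm h0 hE bij h01 h12 h02 [r0 E01] [r1 E12].
have cont k : continuous (phi k) := sm k 0%N.
have dif k : differentiable (phi k) xhat := (sm k 1%N).1 xhat.
have cl j y : bdry (Omega D phi j) y -> forall m, m != j -> phi j y <= phi m y.
  move=> B m mj; case: B => H _; exact: (@clos_le R D phi j m y cont mj H).
have P0 y : phi 0 y = 0 by rewrite h0.
have x1 : phi 1 xhat = 0.
  apply/eqP; rewrite eq_le; apply/andP; split.
  - by rewrite -(P0 xhat); apply: (cl 1 xhat (hE 1 I)).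
  - by rewrite -(P0 xhat); apply: (cl 0 xhat (hE 0 I)).
have x2 : phi 2 xhat = 0.
  apply/eqP; rewrite eq_le; apply/andP; split.
  - by rewrite -(P0 xhat); apply: (cl 2 xhat (hE 2 I)).
  - by rewrite -(P0 xhat); apply: (cl 0 xhat (hE 0 I)).
have S01 y : Eset D phi [set 0; 1] y -> phi 1 y = 0 /\ 0 <= phi 2 y.
  move=> H; have B0 := H 0 (or_introl erefl); have B1 := H 1 (or_intror erefl).
  split; last by rewrite -(P0 y); exact: cl 0 y B0 2 isT.
  apply/eqP; rewrite eq_le; apply/andP; split.
  - by rewrite -(P0 y); exact: cl 1 y B1 0 isT.
  - by rewrite -(P0 y); exact: cl 0 y B0 1 isT.
have S02 y : Eset D phi [set 0; 2] y -> phi 2 y = 0 /\ 0 <= phi 1 y.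
  move=> H; have B0 := H 0 (or_introl erefl); have B2 := H 2 (or_intror erefl).
  split; last by rewrite -(P0 y); exact: cl 0 y B0 1 isT.
  apply/eqP; rewrite eq_le; apply/andP; split.
  - by rewrite -(P0 y); exact: cl 2 y B2 0 isT.
  - by rewrite -(P0 y); exact: cl 0 y B0 2 isT.
have S12 y : Eset D phi [set 1; 2] y -> phi 1 y = phi 2 y /\ phi 1 y <= 0.
  move=> H; have B1 := H 1 (or_introl erefl); have B2 := H 2 (or_intror erefl).
  split; last by rewrite -(P0 y); exact: cl 1 y B1 0 isT.
  apply/eqP; rewrite eq_le; apply/andP; split.
  - exact: cl 1 y B1 2 isT.
  - exact: cl 2 y B2 1 isT.
set L1 := 'd (phi 1) xhat.
set L2 := 'd (phi 2) xhat.
have A1 : L1 d01 = 0.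
  apply/eqP; rewrite eq_le; apply/andP; split.
  - apply: (@keyle R (phi 1) xhat d01 _ (dif 1) h01) => y /S01 [-> _]; by rewrite x1.
  - apply: (@key R (phi 1) xhat d01 _ (dif 1) h01) => y /S01 [-> _]; by rewrite x1.
have A2 : 0 <= L2 d01.
  apply: (@key R (phi 2) xhat d01 _ (dif 2) h01) => y /S01 [_ H]; by rewrite x2.
have A3 : L2 d02 = 0.
  apply/eqP; rewrite eq_le; apply/andP; split.
  - apply: (@keyle R (phi 2) xhat d02 _ (dif 2) h02) => y /S02 [-> _]; by rewrite x2.
  - apply: (@key R (phi 2) xhat d02 _ (dif 2) h02) => y /S02 [-> _]; by rewrite x2.
have A4 : 0 <= L1 d02.
  apply: (@key R (phi 1) xhat d02 _ (dif 1) h02) => y /S02 [_ H]; by rewrite x1.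
have A5 : L1 d12 <= 0.
  apply: (@keyle R (phi 1) xhat d12 _ (dif 1) h12) => y /S12 [_ H]; by rewrite x1.
pose f := phi 1 - phi 2.
have dB : differentiable f xhat by apply: differentiableB.
have E : 'd f xhat d12 = L1 d12 - L2 d12.
  by rewrite /f (diffB (dif 1) (dif 2)).
have fE y : f y = phi 1 y - phi 2 y by [].
have A6 : L1 d12 = L2 d12.
  apply/eqP; rewrite -subr_eq0 -E eq_le; apply/andP; split.
  - apply: (@keyle R f xhat d12 _ dB h12) => y /S12 [H _].
    by rewrite !fE x1 x2 H !subrr.
  - apply: (@key R f xhat d12 _ dB h12) => y /S12 [H _].
    by rewrite !fE x1 x2 H !subrr.
have Eh : phihat phi = (fun y => ((- phi 1) y, (- phi 2) y)).
  by apply/funext => y; rewrite /phihat /= P0 !sub0r.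
have dN k : differentiable (- phi k) xhat by apply: differentiableN.
have Dh v : 'd (phihat phi) xhat v = (- L1 v, - L2 v).
  have N1 : 'd (- phi 1) xhat v = - L1 v.
    by move: (diffN (dif 1)) => /(congr1 (fun g => g v)).
  have N2 : 'd (- phi 2) xhat v = - L2 v.
    by move: (diffN (dif 2)) => /(congr1 (fun g => g v)).
  rewrite Eh.
  rewrite (diff_pair (dN 1) (dN 2)).
  exact: (f_equal2 pair N1 N2).
have inj v : L1 v = 0 -> L2 v = 0 -> v = 0.
  move=> h1 h2; apply: (bij_inj bij); rewrite linear0 Dh h1 h2 oppr0.
  by [].
have nz S v : half_tangent S xhat v -> v != 0.
  move=> /unitd; apply: contraPneq => ->; rewrite /= expr0n /= addr0.
  by move/eqP; rewrite eq_sym oner_eq0.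
have P1 : 0 < L1 d02.
  rewrite lt_neqAle A4 andbT eq_sym; apply/eqP => H.
  by move: (nz _ _ h02); rewrite (inj d02 H A3) eqxx.
have Q1 : 0 < L2 d01.
  rewrite lt_neqAle A2 andbT eq_sym; apply/eqP => H.
  by move: (nz _ _ h01); rewrite (inj d01 A1 H) eqxx.
have R1 : L1 d12 < 0.
  rewrite lt_neqAle A5 andbT; apply/eqP => H.
  have H2 : L2 d12 = 0 by rewrite -A6.
  by move: (nz _ _ h12); rewrite (inj d12 H H2) eqxx.
pose a := L1 (1, 0); pose b := L1 (0, 1).
pose c := L2 (1, 0); pose dd := L2 (0, 1).
have Lf1 v : L1 v = v.1 * a + v.2 * b by exact: lin2.
have Lf2 v : L2 v = v.1 * c + v.2 * dd by exact: lin2.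
have G1 : 0 < d02.1 * a + d02.2 * b by rewrite -Lf1.
have G2 : d02.1 * c + d02.2 * dd = 0 by rewrite -Lf2.
have G3 : (cos th0 * d02.1 - sin th0 * d02.2) * a + (sin th0 * d02.1 + cos th0 * d02.2) * b = 0.
  by rewrite -A1 Lf1 E01.
have G4 : 0 < (cos th0 * d02.1 - sin th0 * d02.2) * c + (sin th0 * d02.1 + cos th0 * d02.2) * dd.
  by rewrite Lf2 E01 in Q1.
have G5 : (cos th1 * d02.1 - sin th1 * d02.2) * a + (sin th1 * d02.1 + cos th1 * d02.2) * b =
  (cos th1 * d02.1 - sin th1 * d02.2) * c + (sin th1 * d02.1 + cos th1 * d02.2) * dd.
  by rewrite Lf1 Lf2 E12 in A6.
have G6 : (cos th1 * d02.1 - sin th1 * d02.2) * a + (sin th1 * d02.1 + cos th1 * d02.2) * b < 0.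
  by rewrite Lf1 E12 in R1.
have GG := (@geom R a b c dd d02.1 d02.2 th0 th1 r0 r1 (@unitd R _ _ _ h02) G1 G2 G3 G4 G5 G6).
exact GG.
Qed.
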